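(* Let $\mathcal C,\mathcal D$ be parsummable categories and $F\colon\mathcal C\to\mathcal D$ a functor of underlying categories that preserves sums. Then $F_*\mathcal C$ (described below) is a well-defined parsummable category.
   Context: Let $\omega=\{1,2,\dots\}$, $\mathcal M$ the monoid of injections $\omega\to\omega$, $E\mathcal M$ the category with objects $\mathcal M$ and unique morphisms between any two objects. An $E\mathcal M$-category is a small category with a strict $E\mathcal M$-action ($u_*$ the action of $u$, $[v,u]\colon u_*\Rightarrow v_*$, $u^X_\circ=[u,1]_X$). Such an action is uniquely determined by an $\mathcal M$-action on objects together with isomorphisms $u^X_\circ\colon X\to u_*X$ satisfying $(uv)^X_\circ=u^{v_*X}_\circ v^X_\circ$. $\mathrm{supp}(X)$ is the intersection of the finite $A\subset\omega$ such that $u_*X=X$ for all $u$ fixing $A$ pointwise; tame means all supports finite. A parsummable category is a tame $E\mathcal M$-category with an object $0$ of empty support and a functor $+$ on the full subcategory $\mathcal C\boxtimes\mathcal C\subset\mathcal C\times\mathcal C$ of disjointly supported pairs, strictly unital, associative, commutative and $E\mathcal M$-equivariant ($u_*(X+Y)=u_*X+u_*Y$, $u^{X+Y}_\circ=u^X_\circ+u^Y_\circ$). A functor $F\colon\mathcal C\to\mathcal D$ of underlying categories preserves sums if $F(0)=0$, $F\times F$ maps $\mathcal C\boxtimes\mathcal C$ into $\mathcal D\boxtimes\mathcal D$, and $F(X+Y)=F(X)+F(Y)$, $F(f+g)=F(f)+F(g)$ for all summable objects and morphisms. $F_*\mathcal C$: objects are the objects of $\mathcal C$; $\mathrm{Hom}_{F_*\mathcal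 C}(X,Y)=\mathrm{Hom}_{\mathcal D}(FX,FY)$ with composition in $\mathcal D$; the $\mathcal M$-action on objects is that of $\mathcal C$, and $u^X_\circ$ is $F(u^X_\circ)\colon F(X)\to F(u_*X)$; the sum of objects is the sum in $\mathcal C$ (with unit $0$), and the sum of morphisms is the sum in $\mathcal D$. *)

(* Defs.v *)
From Stdlib Require Import List.

(* The monoid M of injections omega -> omega.  We model omega = {1,2,...}
   by nat via the order-preserving bijection n |-> n+1 (pure relabelling). *)
Definition Minj : Type := { u : nat -> nat | forall a b, u a = u b -> a = b }.
Definition mfun (u : Minj) : nat -> nat := proj1_sig u.
Definition mid : Minj := exist _ (fun n => n) (fun a b h => h).
Definition mcomp (u v : Minj) : Minj :=
  exist (fun w : nat -> nat => forall a b, w a = w b -> a = b)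
        (fun n => mfun u (mfun v n))
        (fun a b h => proj2_sig v a b (proj2_sig u _ _ h)).

Record Cat := {
  Ob : Type;
  Hom : Ob -> Ob -> Type;
  idm : forall X, Hom X X;
  comp : forall X Y Z, Hom Y Z -> Hom X Y -> Hom X Z;
  comp_idl : forall X Y (f : Hom X Y), comp X Y Y (idm Y) f = f;
  comp_idr : forall X Y (f : Hom X Y), comp X X Y f (idm X) = f;
  comp_assoc : forall X Y Z W (f : Hom X Y) (g : Hom Y Z) (h : Hom Z W),
      comp X Z W h (comp X Y Z g f) = comp X Y W (comp Y Z W h g) f
}.
Arguments Hom {c} _ _.
Arguments idm {c} _.
Arguments comp {c X Y Z} _ _.

(* Equality of arrows is equality in this set; it is used to compare
   morphisms whose (source, target) are only propositionally equal. *)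
Definition Arr (C : Cat) : Type := { p : Ob C * Ob C & Hom (fst p) (snd p) }.
Definition arr {C : Cat} {X Y : Ob C} (f : Hom X Y) : Arr C :=
  existT (fun p : Ob C * Ob C => Hom (fst p) (snd p)) (X, Y) f.

Definition is_iso {C : Cat} {X Y : Ob C} (f : Hom X Y) : Prop :=
  exists g : Hom Y X, comp g f = idm X /\ comp f g = idm Y.

Record Functor (C D : Cat) := {
  fob : Ob C -> Ob D;
  fmor : forall X Y, @Hom C X Y -> @Hom D (fob X) (fob Y);
  fmor_id : forall X, fmor X X (idm X) = idm (fob X);
  fmor_comp : forall X Y Z (f : @Hom C X Y) (g : @Hom C Y Z),
      fmor X Z (comp g f) = comp (fmor Y Z g) (fmor X Y f)
}.
Arguments fob {C D} _ _.
Arguments fmor {C D} _ {X Y} _.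

(* E M-categories, in the form: M-action on objects + isomorphisms
   u_o^X : X -> u_* X with (uv)_o^X = u_o^{v_* X} o v_o^X. *)
Record EMdata (C : Cat) := {
  act : Minj -> Ob C -> Ob C;
  circ : forall u X, @Hom C X (act u X)
}.
Arguments act {C} _ _ _.
Arguments circ {C} _ _ _.

Definition is_EMcat {C : Cat} (E : EMdata C) : Prop :=
  (forall X, act E mid X = X) /\
  (forall u v X, act E (mcomp u v) X = act E u (act E v X)) /\
  (forall u X, is_iso (circ E u X)) /\
  (forall u v X, arr (circ E (mcomp u v) X)
                 = arr (comp (circ E u (act E v X)) (circ E v X))).

(* Supports.  A finite subset of omega is given by a list. *)
Definition supported_on {C : Cat} (E : EMdata C) (X : Ob C) (A : list nat) : Prop :=
  forall u : Minj, (forall a, In a A -> mfun u a = a) -> act E u X = X.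

Definition supp {C : Cat} (E : EMdata C) (X : Ob C) (n : nat) : Prop :=
  forall A : list nat, supported_on E X A -> In n A.

Definition finite_set (P : nat -> Prop) : Prop :=
  exists s : list nat, forall n, P n -> In n s.

Definition tame {C : Cat} (E : EMdata C) : Prop :=
  forall X, finite_set (supp E X).

Definition disj {C : Cat} (E : EMdata C) (X Y : Ob C) : Prop :=
  forall n, supp E X n -> supp E Y n -> False.

Record PSdata {C : Cat} (E : EMdata C) := {
  zero : Ob C;
  sumo : forall X Y, disj E X Y -> Ob C;
  summ : forall X X' Y Y' (H : disj E X Y) (H' : disj E X' Y'),
      @Hom C X X' -> @Hom C Y Y' -> @Hom C (sumo X Y H) (sumo X' Y' H')
}.
Arguments zero {C E} _.
Arguments sumo {C E} _ {X Y} _.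
Arguments summ {C E} _ {X X' Y Y'} _ _ _ _.

Definition is_parsummable {C : Cat} {E : EMdata C} (P : PSdata E) : Prop :=
  is_EMcat E /\ tame E /\
  (forall n, ~ supp E (zero P) n) /\
  (forall X Y (H : disj E X Y), summ P H H (idm X) (idm Y) = idm (sumo P H)) /\
  (forall X X' X'' Y Y' Y'' (H : disj E X Y) (H' : disj E X' Y') (H'' : disj E X'' Y'')
          (f : Hom X X') (f' : Hom X' X'') (g : Hom Y Y') (g' : Hom Y' Y''),
      summ P H H'' (comp f' f) (comp g' g) = comp (summ P H' H'' f' g') (summ P H H' f g)) /\
  (forall X (H : disj E X (zero P)), sumo P H = X) /\
  (forall X (H : disj E (zero P) X), sumo P H = X) /\
  (forall X X' (H : disj E X (zero P)) (H' : disj E X' (zero P)) (f : Hom X X'),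
      arr (summ P H H' f (idm (zero P))) = arr f) /\
  (forall X X' (H : disj E (zero P) X) (H' : disj E (zero P) X') (f : Hom X X'),
      arr (summ P H H' (idm (zero P)) f) = arr f) /\
  (forall X Y Z (Hxy : disj E X Y) (Hyz : disj E Y Z) (Hxz : disj E X Z)
          (H1 : disj E (sumo P Hxy) Z) (H2 : disj E X (sumo P Hyz)),
      sumo P H1 = sumo P H2) /\
  (forall X Y Z X' Y' Z'
          (Hxy : disj E X Y) (Hyz : disj E Y Z) (Hxz : disj E X Z)
          (H1 : disj E (sumo P Hxy) Z) (H2 : disj E X (sumo P Hyz))
          (Hxy' : disj E X' Y') (Hyz' : disj E Y' Z') (Hxz' : disj E X' Z')
          (H1' : disj E (sumo P Hxy') Z') (H2' : disj E X' (sumo P Hyz'))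
          (f : Hom X X') (g : Hom Y Y') (h : Hom Z Z'),
      arr (summ P H1 H1' (summ P Hxy Hxy' f g) h)
      = arr (summ P H2 H2' f (summ P Hyz Hyz' g h))) /\
  (forall X Y (H : disj E X Y) (Hs : disj E Y X), sumo P H = sumo P Hs) /\
  (forall X Y X' Y' (H : disj E X Y) (Hs : disj E Y X)
          (H' : disj E X' Y') (Hs' : disj E Y' X') (f : Hom X X') (g : Hom Y Y'),
      arr (summ P H H' f g) = arr (summ P Hs Hs' g f)) /\
  (forall u X Y (H : disj E X Y) (Hu : disj E (act E u X) (act E u Y)),
      act E u (sumo P H) = sumo P Hu) /\
  (forall u X Y (H : disj E X Y) (Hu : disj E (act E u X) (act E u Y)),
      arr (circ E u (sumo P H)) = arr (summ P H Hu (circ E u X) (circ E u Y))).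

Record Parsummable := {
  PCat : Cat;
  PEM : EMdata PCat;
  PPS : PSdata PEM;
  P_ax : is_parsummable PPS
}.

Record preserves_sums (C D : Parsummable) (F : Functor (PCat C) (PCat D)) : Prop := {
  ps_zero : fob F (zero (PPS C)) = zero (PPS D);
  ps_disj : forall X Y, disj (PEM C) X Y -> disj (PEM D) (fob F X) (fob F Y);
  ps_sumo : forall X Y (H : disj (PEM C) X Y) (HF : disj (PEM D) (fob F X) (fob F Y)),
      fob F (sumo (PPS C) H) = sumo (PPS D) HF;
  ps_summ : forall X X' Y Y' (H : disj (PEM C) X Y) (H' : disj (PEM C) X' Y')
                   (HF : disj (PEM D) (fob F X) (fob F Y))
                   (HF' : disj (PEM D) (fob F X') (fob F Y'))
                   (f : @Hom (PCat C) X X') (g : @Hom (PCat C) Y Y'),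
      arr (fmor F (summ (PPS C) H H' f g))
      = arr (summ (PPS D) HF HF' (fmor F f) (fmor F g))
}.

Arguments ps_disj {C D F} _ {X Y} _.
Arguments ps_sumo {C D F} _ {X Y} _ _.

Section Push.
Variables (C D : Parsummable) (F : Functor (PCat C) (PCat D)).

Definition pushCat : Cat :=
  {| Ob := Ob (PCat C);
     Hom := fun X Y => @Hom (PCat D) (fob F X) (fob F Y);
     idm := fun X => idm (fob F X);
     comp := fun X Y Z g f => comp g f;
     comp_idl := fun X Y f => comp_idl (PCat D) (fob F X) (fob F Y) f;
     comp_idr := fun X Y f => comp_idr (PCat D) (fob F X) (fob F Y) f;
     comp_assoc := fun X Y Z W f g h =>
       comp_assoc (PCat D) (fob F X) (fob F Y) (fob F Z) (fob F W) f g h |}.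

Definition pushEM : EMdata pushCat :=
  {| act := act (PEM C) : Minj -> Ob pushCat -> Ob pushCat;
     circ := fun u X => fmor F (circ (PEM C) u X) |}.

Definition castHom {K : Cat} {A A' B B' : Ob K} (e1 : A = A') (e2 : B = B')
  (f : @Hom K A' B') : @Hom K A B :=
  match eq_sym e1 in _ = A0 return @Hom K A0 B with
  | eq_refl => match eq_sym e2 in _ = B0 return @Hom K A' B0 with
               | eq_refl => f end end.

Variable hF : preserves_sums C D F.

Definition pushPS : PSdata pushEM :=
  @Build_PSdata pushCat pushEM
     (zero (PPS C) : Ob pushCat)
     (fun X Y (H : disj pushEM X Y) => @sumo _ _ (PPS C) X Y H : Ob pushCat)
     (fun X X' Y Y' (H : disj pushEM X Y) (H' : disj pushEM X' Y')
              (f : @Hom pushCat X X') (g : @Hom pushCat Y Y') =>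
       @castHom (PCat D) _ _ _ _ (ps_sumo hF H (ps_disj hF H)) (ps_sumo hF H' (ps_disj hF H'))
               (summ (PPS D) (ps_disj hF H) (ps_disj hF H') f g)).

End Push.

(* Main.v *)
Require Import Defs.
From Stdlib Require Import List ProofIrrelevance Eqdep.

Lemma arr_inj {K : Cat} {X Y : Ob K} (f g : @Hom K X Y) : arr f = arr g -> f = g.
Proof. intro h. unfold arr in h. exact (EqdepTheory.inj_pair2 _ _ _ _ _ h). Qed.

Lemma arr_cast {K : Cat} {A A' B B' : Ob K} (e1 : A = A') (e2 : B = B') (f : @Hom K A' B') :
  arr (castHom e1 e2 f) = arr f.
Proof. subst. reflexivity. Qed.

Lemma comp_cast {K : Cat} {A A' B B' Z Z' : Ob K} (e1 : A = A') (e2 : B = B') (e3 : Z = Z')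
  (a : @Hom K B' Z') (b : @Hom K A' B') :
  arr (comp (castHom e2 e3 a) (castHom e1 e2 b)) = arr (comp a b).
Proof. subst. reflexivity. Qed.

Lemma arr_idm {K : Cat} {A B : Ob K} (e : A = B) : arr (idm A) = arr (idm B).
Proof. subst. reflexivity. Qed.

Definition mapArr {C D : Cat} (F : Functor C D) (a : Arr C) : Arr D :=
  match a with existT _ p f => arr (fmor F f) end.

Section S.
Variables (C D : Parsummable) (F : Functor (PCat C) (PCat D)) (hF : preserves_sums C D F).

Lemma push_arr_eq {X Y X' Y' : Ob (pushCat C D F)}
  (f : @Hom (pushCat C D F) X Y) (g : @Hom (pushCat C D F) X' Y') :
  X = X' -> Y = Y' -> arr (C:=PCat D) f = arr (C:=PCat D) g ->
  arr (C:=pushCat C D F) f = arr (C:=pushCat C D F) g.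
Proof. intros -> -> h. apply arr_inj in h. subst. reflexivity. Qed.

Lemma summ_castl {A A' B B' Y Y' : Ob (PCat D)} (e1 : A = A') (e2 : B = B')
  (H : disj (PEM D) A Y) (H' : disj (PEM D) B Y') (K : disj (PEM D) A' Y) (K' : disj (PEM D) B' Y')
  (f : @Hom (PCat D) A' B') (g : @Hom (PCat D) Y Y') :
  arr (summ (PPS D) H H' (castHom e1 e2 f) g) = arr (summ (PPS D) K K' f g).
Proof. subst. rewrite (proof_irrelevance _ H K), (proof_irrelevance _ H' K'). reflexivity. Qed.

Lemma summ_castr {A A' B B' Y Y' : Ob (PCat D)} (e1 : A = A') (e2 : B = B')
  (H : disj (PEM D) Y A) (H' : disj (PEM D) Y' B) (K : disj (PEM D) Y A') (K' : disj (PEM D) Y' B')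
  (f : @Hom (PCat D) A' B') (g : @Hom (PCat D) Y Y') :
  arr (summ (PPS D) H H' g (castHom e1 e2 f)) = arr (summ (PPS D) K K' g f).
Proof. subst. rewrite (proof_irrelevance _ H K), (proof_irrelevance _ H' K'). reflexivity. Qed.

End S.

Theorem lemma3p8 (C D : Parsummable) (F : Functor (PCat C) (PCat D))
  (hF : preserves_sums C D F) :
  is_parsummable (pushPS C D F hF).
Proof.
  destruct (P_ax C) as (HEM & Htame & Hz & Hid & Hcomp & Hu1 & Hu2 & Hu1m & Hu2m & Has & Hasm & Hcm & Hcmm & Heq & Heqm).
  destruct (P_ax D) as (DEM & Dtame & Dz & Did & Dcomp & Du1 & Du2 & Du1m & Du2m & Das & Dasm & Dcm & Dcmm & Deq & Deqm).
  destruct HEM as (Ha1 & Ha2 & Hiso & Hcirc).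
  unfold is_parsummable.
  repeat split.
  all: cbn [summ sumo zero pushPS].
  - exact Ha1.
  - exact Ha2.
  - intros u X. destruct (Hiso u X) as (g & h1 & h2).
    exists (fmor F g). cbn. rewrite <- !fmor_comp, h1, h2, !fmor_id. split; reflexivity.
  - intros u v X. apply push_arr_eq; [reflexivity|apply Ha2|]. cbn.
    pose proof (f_equal (mapArr F) (Hcirc u v X)) as h. cbn in h.
    rewrite fmor_comp in h. exact h.
  - exact Htame.
  - exact Hz.
  - intros X Y H. apply (arr_inj (K:=PCat D)). rewrite arr_cast, Did. apply (arr_idm (K:=PCat D)). symmetry. apply (ps_sumo hF).
  - intros. apply (arr_inj (K:=PCat D)). cbn. rewrite comp_cast, arr_cast, (Dcomp _ _ _ _ _ _ _ (ps_disj hF H')). reflexivity.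
  - exact Hu1.
  - exact Hu2.
  - intros X X' H H' f. apply push_arr_eq; [apply Hu1|apply Hu1|].
    rewrite arr_cast. cbn.
    generalize (ps_disj hF H) (ps_disj hF H'). revert f. cbn.
    generalize (ps_zero _ _ _ hF). generalize (fob F (zero (PPS C))). intros z e. subst z.
    intros f d d'. apply Du1m.
  - intros X X' H H' f. apply push_arr_eq; [apply Hu2|apply Hu2|].
    rewrite arr_cast. cbn.
    generalize (ps_disj hF H) (ps_disj hF H'). revert f. cbn.
    generalize (ps_zero _ _ _ hF). generalize (fob F (zero (PPS C))). intros z e. subst z.
    intros f d d'. apply Du2m.
  - exact Has.
  - intros. apply push_arr_eq; [eapply Has; eauto|eapply Has; eauto|].
    rewrite !arr_cast.
    assert (K1 : disj (PEM D) (sumo (PPS D) (ps_disj hF Hxy)) (fob F Z)).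
    { rewrite <- (ps_sumo hF Hxy). exact (ps_disj hF H1). }
    assert (K1' : disj (PEM D) (sumo (PPS D) (ps_disj hF Hxy')) (fob F Z')).
    { rewrite <- (ps_sumo hF Hxy'). exact (ps_disj hF H1'). }
    assert (K2 : disj (PEM D) (fob F X) (sumo (PPS D) (ps_disj hF Hyz))).
    { rewrite <- (ps_sumo hF Hyz). exact (ps_disj hF H2). }
    assert (K2' : disj (PEM D) (fob F X') (sumo (PPS D) (ps_disj hF Hyz'))).
    { rewrite <- (ps_sumo hF Hyz'). exact (ps_disj hF H2'). }
    rewrite (summ_castl D _ _ _ _ K1 K1').
    rewrite (summ_castr D _ _ _ _ K2 K2').
    apply Dasm. apply (ps_disj hF Hxz). apply (ps_disj hF Hxz').
  - exact Hcm.
  - intros. apply push_arr_eq; [apply Hcm|apply Hcm|].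
    rewrite !arr_cast. apply Dcmm.
  - exact Heq.
  - intros. apply push_arr_eq; [reflexivity|apply Heq|].
    rewrite arr_cast. cbn.
    pose proof (f_equal (mapArr F) (Heqm u X Y H Hu)) as h. cbn in h.
    rewrite h. apply (ps_summ _ _ _ hF).
Qed.
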